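(* Let $\phi:[0,\infty)\to\mathbb{R}$ be such that $x\mapsto\phi(\|x\|)$ is $C^\infty$ on $\mathbb{R}^d$, $\phi(0)>0$, $\phi(u)\to0$ as $u\to\infty$, and $\phi,\phi',\phi''$ are integrable on $[0,\infty)$. Fix $\eta_d,\eta_g>0$. Then there is $\lambda_0>0$ such that for every $\lambda\in(0,\lambda_0)$ there exists $v_0>0$ with $$v_0=-\eta_g\eta_d\sum_{j=0}^\infty\rho^j\phi'(jv_0),\qquad\rho=1-\eta_d\lambda.$$ *)

(* Defs.v *)
From HB Require Import structures.
From mathcomp Require Import all_boot all_order all_algebra.
From mathcomp Require Import all_classical all_reals all_analysis.
Set Implicit Arguments. Unset Strict Implicit. Unset Printing Implicit Defensive.
Import Order.TTheory GRing.Theory Num.Theory.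
Import numFieldNormedType.Exports.
Local Open Scope classical_set_scope.
Local Open Scope ring_scope.

Section Defs.
Variable R : realType.

Definition enorm (d : nat) (x : 'rV[R]_d) : R :=
  Num.sqrt (\sum_(i < d) x ord0 i ^+ 2).

Definition ebasis (d : nat) (i : 'I_d) : 'rV[R]_d := delta_mx ord0 i.

Fixpoint iter_partial (d : nat) (s : seq 'I_d) (f : 'rV[R]_d -> R) : 'rV[R]_d -> R :=
  match s with
  | [::] => f
  | i :: s' => fun x => derive (iter_partial s' f) x (ebasis i)
  end.

Definition smooth_Rd (d : nat) (f : 'rV[R]_d -> R) : Prop :=
  forall s : seq 'I_d,
    continuous (iter_partial s f) /\
    (forall (i : 'I_d) (x : 'rV[R]_d), derivable (iter_partial s f) x (ebasis i)).

Definition is_deriv_Ici (f df : R -> R) : Prop :=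
  (forall u : R, 0 < u -> is_derive u (1 : R) f (df u)) /\
  ((fun h : R => (f h - f 0) / h) @ 0^'+ --> df 0).

End Defs.

(* Main.v *)
Require Import Defs.
From HB Require Import structures.
From mathcomp Require Import all_boot all_order all_algebra.
From mathcomp Require Import all_classical all_reals all_analysis.
From mathcomp Require Import ring lra.
Import Order.TTheory GRing.Theory Num.Theory.
Import numFieldNormedType.Exports.
Local Open Scope classical_set_scope.
Local Open Scope ring_scope.

Set Implicit Arguments. Unset Strict Implicit. Unset Printing Implicit Defensive.
Section S.
Variable R : realType.

Lemma enorm_scale d (i : 'I_d) (s : R) : enorm (s *: ebasis R i) = `|s|.
Proof.
rewrite /enorm /ebasis (bigD1 i) //= big1 ?addr0.
  by rewrite !mxE !eqxx /= mulr1 sqrtr_sqr.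
by move=> j /negbTE ji; rewrite !mxE ji andbF mulr0 expr0n.
Qed.

Lemma rad_cvg d (i : 'I_d) (G : 'rV[R]_d -> R) (H : R -> R) (t l : R) :
  (forall s, 0 < s -> G (s *: ebasis R i) = H s) -> 0 < t ->
  is_derive t 1 H l ->
  (fun h : R => h^-1 *: ((G \o shift (t *: ebasis R i)) (h *: ebasis R i) - G (t *: ebasis R i))) @ 0^' --> l.
Proof.
move=> GH t0 [hc <-].
have hH : (fun h : R => h^-1 *: ((H \o shift t) (h *: 1) - H t)) @ 0^' --> derive H t 1 := hc.
apply: cvg_trans hH; apply: near_eq_cvg.
have : \forall h \near (0:R)^', - t < h.
  apply: cvg_within; apply: (@cvgr_gt _ _ _ _ id 0 cvg_id).
  by rewrite oppr_lt0.
apply: filterS => h ht /=.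
rewrite -scalerDl GH ?GH //; last by rewrite -ltrBlDr sub0r.
by rewrite /= scaler1 addrC.
Qed.

Lemma rad_derive d (i : 'I_d) (G : 'rV[R]_d -> R) (H : R -> R) (t l : R) :
  (forall s, 0 < s -> G (s *: ebasis R i) = H s) -> 0 < t ->
  is_derive t 1 H l -> derive G (t *: ebasis R i) (ebasis R i) = l.
Proof. move=> GH t0 hd; have := rad_cvg GH t0 hd; exact: cvg_lim. Qed.

Lemma ddphi_cont d (hd : (0 < d)%N) (phi dphi ddphi : R -> R) :
  smooth_Rd (fun x : 'rV[R]_d => phi (enorm x)) ->
  (forall u : R, 0 < u -> is_derive u 1 phi (dphi u)) ->
  (forall u : R, 0 < u -> is_derive u 1 dphi (ddphi u)) ->
  forall t : R, 0 < t -> {for t, continuous ddphi}.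
Proof.
move=> hs h1 h2 t t0.
pose i := Ordinal hd.
pose f := fun x : 'rV[R]_d => phi (enorm x).
have e1 : forall s, 0 < s -> f (s *: ebasis R i) = phi s.
  by move=> s s0; rewrite /f enorm_scale gtr0_norm.
have e2 : forall s, 0 < s -> iter_partial [:: i] f (s *: ebasis R i) = dphi s.
  by move=> s s0 /=; apply: rad_derive e1 s0 (h1 s s0).
have e3 : forall s, 0 < s -> iter_partial [:: i; i] f (s *: ebasis R i) = ddphi s.
  by move=> s s0; rewrite [LHS]/=; apply: rad_derive e2 s0 (h2 s s0).
have cK := (hs [:: i; i]).1.
have cc : {for t, continuous (iter_partial [:: i; i] f \o (fun s : R => s *: ebasis R i))}.
  apply: continuous_comp; last exact: cK.
  exact: scalel_continuous.
rewrite /prop_for /continuous_at -(e3 t t0).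
apply: cvg_trans cc; apply: near_eq_cvg.
near=> s; have := e3 s; rewrite /= => ->//.
near: s; exact: (@cvgr_gt _ _ _ _ id t cvg_id).
Unshelve. all: by end_near. Qed.

Notation mu := (@lebesgue_measure R).

Lemma W_exists (g : R -> R) :
  (forall t : R, 0 < t -> {for t, continuous g}) ->
  mu.-integrable `[0, +oo[ (EFin \o g) ->
  exists W : R -> R, exists K : R,
    (forall t : R, 0 < t -> is_derive t 1 W `|g t|) /\ (forall t, 0 <= W t <= K).
Proof.
move=> cg ig.
have ia : mu.-integrable `[0, +oo[ (EFin \o (Num.norm \o g)) := integrable_norm ig.
pose W t := \int[mu]_(x in `[0, t]) `|g x|.
exists W, (\int[mu]_(x in `[0, +oo[) `|g x|); split.
  move=> t t0.
  have [dW W'] : derivable W t 1 /\ derive1 W t = `|g t|.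
    apply: (@continuous_FTC1_closed R (Num.norm \o g) 0 t (t + 1)) => //.
    - by rewrite ltrDl.
    - apply: integrableS ia => //; apply: subset_itvl; rewrite bnd_simp.
      done.
    - apply: continuous_comp; first exact: cg.
      exact: norm_continuous.
  by apply: DeriveDef => //; rewrite -derive1E.
move=> t; apply/andP; split.
  by apply: Rintegral_ge0 => x _; exact: normr_ge0.
rewrite /W /Rintegral; apply: fine_le.
- apply: integrable_fin_num => //; apply: integrableS ia => //.
  by apply: subset_itvl; rewrite bnd_simp.
- exact: integrable_fin_num.
- apply: ge0_subset_integral => //.
  all: try by case/integrableP: ia.
  all: try by move=> x _ /=; rewrite lee_fin normr_ge0.
  all: try by apply: subset_itvl; rewrite bnd_simp.
Qed.


Lemma mvt_ge0 (f df : R -> R) (s u : R) : 0 < s -> s <= u ->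
  (forall t : R, 0 < t -> is_derive t 1 f (df t)) ->
  (forall t : R, 0 < t -> 0 <= df t) -> f s <= f u.
Proof.
move=> s0 su hd hp.
have [c cin E] : exists2 c, c \in `[s, u]%R & f u - f s = df c * (u - s).
  apply: MVT_segment => //.
    move=> x; rewrite in_itv /= => /andP[sx _]; apply: hd; exact: lt_trans sx.
  apply: derivable_within_continuous => x; rewrite in_itv /= => /andP[sx _].
  by have [] := hd x (lt_le_trans s0 sx).
rewrite -subr_ge0 E mulr_ge0 //; last by rewrite subr_ge0.
apply: hp; move: cin; rewrite in_itv /= => /andP[sc _]; exact: lt_le_trans sc.
Qed.

Lemma var_bound (psi g W : R -> R) :
  (forall t : R, 0 < t -> is_derive t 1 psi (g t)) ->
  (forall t : R, 0 < t -> is_derive t 1 W `|g t|) ->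
  forall s u : R, 0 < s -> s <= u -> `|psi u - psi s| <= W u - W s.
Proof.
move=> hp hW s u s0 su.
have h1 : (W - psi) s <= (W - psi) u.
  apply: (@mvt_ge0 _ (fun t => `|g t| - g t)) => // t t0.
    by apply: is_deriveB; [exact: hW | exact: hp].
  by rewrite subr_ge0 ler_norm.
have h2 : (W + psi) s <= (W + psi) u.
  apply: (@mvt_ge0 _ (fun t => `|g t| + g t)) => // t t0.
    by apply: is_deriveD; [exact: hW | exact: hp].
  by have := ler_norm (- g t); rewrite normrN; lra.
have h1' : W s - psi s <= W u - psi u := h1.
have h2' : W s + psi s <= W u + psi u := h2.
rewrite ler_norml; apply/andP; split; lra.
Qed.

Lemma riem_step (phi psi W : R -> R) :
  (forall t : R, 0 < t -> is_derive t 1 phi (psi t)) ->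
  (forall s u : R, 0 < s -> s <= u -> `|psi u - psi s| <= W u - W s) ->
  forall s a : R, 0 < s -> 0 < a ->
  `|phi (s + a) - phi s - a * psi s| <= a * (W (s + a) - W s).
Proof.
move=> hd hv s a s0 a0.
have sa : s <= s + a by rewrite lerDl ltW.
have [c cin E] : exists2 c, c \in `[s, s + a]%R & phi (s + a) - phi s = psi c * (s + a - s).
  apply: MVT_segment => //.
    move=> x; rewrite in_itv /= => /andP[sx _]; apply: hd; exact: lt_trans sx.
  apply: derivable_within_continuous => x; rewrite in_itv /= => /andP[sx _].
  by have [] := hd x (lt_le_trans s0 sx).
move: cin; rewrite in_itv /= => /andP[sc cs].
have h1 := hv s c s0 sc.
have h2 := hv c (s + a) (lt_le_trans s0 sc) cs.
have h3 := normr_ge0 (psi (s + a) - psi c).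
rewrite E.
have -> : psi c * (s + a - s) - a * psi s = a * (psi c - psi s) by ring.
rewrite normrM (gtr0_norm a0) ler_pM2l //; lra.
Qed.

Lemma geom_tail (u : R^nat) (B r : R) : 0 <= r -> r < 1 ->
  (forall j, `|u j| <= B * r ^+ j) ->
  cvgn (series u) /\
  forall N, (1 - r) * `|limn (series u) - series u N| <= B * r ^+ N.
Proof.
move=> r0 r1 hu.
have B0 : 0 <= B by have := hu 0%N; rewrite expr0 mulr1; apply: le_trans.
have cs : cvgn (series u).
  apply: normed_cvg.
  apply: (@series_le_cvg _ _ (geometric B r)).
  - by move=> n; exact: normr_ge0.
  - by move=> n; exact: geometric_ge0.
  - by move=> n; exact: hu.
  - by apply: is_cvg_geometric_series; rewrite ger0_norm.
split => // N.
have hk : forall k, (1 - r) * `|series u (k + N) - series u N| <= B * (r ^+ N - r ^+ (k + N)).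
  elim=> [|k IH]; first by rewrite add0n subrr normr0 mulr0 subrr mulr0.
  rewrite addSn seriesSr.
  have h1 : `|series u (k + N) + u (k + N) - series u N| <= `|series u (k + N) - series u N| + `|u (k + N)|.
    by rewrite addrAC; exact: ler_normD.
  have h2 := hu (k + N)%N.
  have h3 : 0 <= 1 - r by rewrite subr_ge0 ltW.
  have h4 : (1 - r) * `|series u (k + N) + u (k + N) - series u N| <=
            (1 - r) * `|series u (k + N) - series u N| + (1 - r) * `|u (k + N)|.
    by rewrite -mulrDr; exact: ler_wpM2l.
  have h5 : (1 - r) * `|u (k + N)| <= (1 - r) * (B * r ^+ (k + N)) by exact: ler_wpM2l.
  rewrite exprS.
  have h6 : 0 <= B * r ^+ (k + N) by apply: mulr_ge0 => //; exact: exprn_ge0.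
  nra.
have cf : (fun n => (1 - r) * `|series u n - series u N|) @ \oo -->
          (1 - r) * `|limn (series u) - series u N|.
  apply: cvgM; first exact: cvg_cst.
  apply: cvg_norm; apply: cvgB; [exact: cs | exact: cvg_cst].
rewrite -(cvg_lim _ cf) //.
apply: limr_le; first by apply/cvg_ex; eexists; exact: cf.
near=> n.
have -> : n = ((n - N) + N)%N by rewrite subnK //; near: n; exact: nbhs_infty_ge.
apply: le_trans (hk _) _.
have := exprn_ge0 (n - N + N) r0.
nra.
Unshelve. all: by end_near. Qed.

Lemma cont_psum (g : nat -> R -> R) (r : R) N :
  (forall j, continuous (g j)) ->
  continuous (fun v => series (fun j => r ^+ j * g j v) N).
Proof.
move=> cg; elim: N => [|N IH].
  move=> x; rewrite /series /=.
  have -> : (fun v : R => \sum_(0 <= k < 0) r ^+ k * g k v) = cst 0.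
    by apply: funext => v; rewrite big_geq.
  exact: cvg_cst.
move=> x.
have -> : (fun v => series (fun j => r ^+ j * g j v) N.+1) =
  (fun v => series (fun j => r ^+ j * g j v) N + r ^+ N * g N v).
  by apply: funext => v; rewrite seriesSr.
apply: cvgD; first exact: IH.
apply: cvgM; [exact: cvg_cst | exact: cg].
Qed.

Lemma cont_series (g : nat -> R -> R) (B r : R) : 0 <= r -> r < 1 ->
  (forall j, continuous (g j)) -> (forall j v, `|g j v| <= B) ->
  continuous (fun v => limn (series (fun j => r ^+ j * g j v))).
Proof.
move=> r0 r1 cg gB x.
have B0 : 0 <= B by exact: le_trans (gB 0%N x).
have tail : forall v N, (1 - r) * `|limn (series (fun j => r ^+ j * g j v)) -
      series (fun j => r ^+ j * g j v) N| <= B * r ^+ N.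
  move=> v N; apply: (geom_tail r0 r1 _).2 => j.
  rewrite normrM ger0_norm ?exprn_ge0 // mulrC; apply: ler_wpM2r => //.
  exact: exprn_ge0.
apply/cvgrPdist_lt => e e0.
have r1' : 0 < 1 - r by rewrite subr_gt0.
near \oo => N.
have hN : B * r ^+ N < (1 - r) * (e / 4).
  near: N; apply: (@cvgr_lt _ _ _ _ (geometric B r) 0); last first.
    by apply: mulr_gt0 => //; apply: divr_gt0.
  by apply: cvg_geometric; rewrite ger0_norm.
have cP := @cont_psum g r N cg x.
move/cvgrPdist_lt : cP => /(_ (e / 2)) cP.
have e2 : 0 < e / 2 by apply: divr_gt0.
near=> t.
have h1 := tail x N.
have h2 := tail t N.
have h3 : `|series (fun j => r ^+ j * g j x) N - series (fun j => r ^+ j * g j t) N| < e / 2.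
  by near: t; exact: cP.
set Fx := limn _ in h1 *; set Ft := limn _ in h2 *.
set Px := series _ N in h1 h3 *; set Pt := series _ N in h2 h3 *.
have h4 : `|Fx - Ft| <= `|Fx - Px| + `|Px - Pt| + `|Pt - Ft|.
  have -> : Fx - Ft = (Fx - Px) + (Px - Pt) + (Pt - Ft) by ring.
  by apply: le_trans (ler_normD _ _) _; rewrite lerD2r ler_normD.
have h5 : `|Pt - Ft| = `|Ft - Pt| by rewrite distrC.
have h6 : (1 - r) * `|Fx - Px| < (1 - r) * (e / 4) by exact: le_lt_trans h1 hN.
have h7 : (1 - r) * `|Ft - Pt| < (1 - r) * (e / 4) by exact: le_lt_trans h2 hN.
rewrite ltr_pM2l // in h6; rewrite ltr_pM2l // in h7.
lra.
Unshelve. all: by end_near. Qed.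


Lemma sumT (x : nat -> R) (r : R) N :
  \sum_(0 <= j < N) r ^+ j.+1 * (x j.+1 - x j) =
  r ^+ N * x N - x 0%N + \sum_(0 <= k < N) (1 - r) * r ^+ k * x k.
Proof.
elim: N => [|N IH]; first by rewrite !big_geq // expr0 mul1r subrr addr0.
rewrite !big_nat_recr //= IH exprS; ring.
Qed.

Lemma sumD (x : nat -> R) (r e : R) (K N : nat) : 0 <= r <= 1 ->
  (forall k, (K <= k)%N -> `|x k| <= e) ->
  \sum_(0 <= k < N) (1 - r) * r ^+ k * x k <=
  (1 - r) * \sum_(0 <= k < minn N K) `|x k| + e * (1 - r ^+ N).
Proof.
move=> /andP[r0 r1] hx.
have h1r : 0 <= 1 - r by rewrite subr_ge0.
elim: N => [|N IH]; first by rewrite big_geq // min0n big_geq // mulr0 expr0 subrr mulr0 addr0.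
rewrite big_nat_recr //=.
have hrN : 0 <= r ^+ N := exprn_ge0 N r0.
have hrN1 : r ^+ N <= 1 by rewrite exprn_ile1.
have e0 : 0 <= e by exact: le_trans (normr_ge0 _) (hx K (leqnn K)).
have eN : e * (1 - r ^+ N) <= e * (1 - r ^+ N.+1).
  by apply: ler_wpM2l => //; rewrite lerD2l lerN2 exprS; nra.
case: (ltnP N K) => NK.
  rewrite (_ : minn N.+1 K = N.+1); last by apply/minn_idPl.
  rewrite (_ : minn N K = N) in IH; last by apply/minn_idPl; exact: ltnW.
  rewrite big_nat_recr //=.
  have hx1 : (1 - r) * r ^+ N * x N <= (1 - r) * `|x N|.
    rewrite -mulrA; apply: ler_wpM2l => //.
    apply: le_trans (ler_norm _) _; rewrite normrM ger0_norm //.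
    by rewrite -[leRHS]mul1r ler_wpM2r.
  rewrite mulrDr; lra.
rewrite (_ : minn N.+1 K = K); last by apply/minn_idPr; exact: leqW.
rewrite (_ : minn N K = K) in IH; last by apply/minn_idPr.
have hx1 : (1 - r) * r ^+ N * x N <= e * (r ^+ N - r ^+ N.+1).
  have -> : r ^+ N - r ^+ N.+1 = (1 - r) * r ^+ N by rewrite exprS; ring.
  have : x N <= e by exact: le_trans (ler_norm _) (hx N NK).
  have : 0 <= (1 - r) * r ^+ N by exact: mulr_ge0.
  nra.
lra.
Qed.

Lemma core (phi psi W : R -> R) (a r e K2 : R) (K N : nat) :
  0 < a -> 0 <= r <= 1 ->
  (forall s, 0 < s -> `|phi (s + a) - phi s - a * psi s| <= a * (W (s + a) - W s)) ->
  (forall s u, 0 < s -> s <= u -> W s <= W u) ->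
  (forall t, 0 <= W t <= K2) ->
  (forall k, (K <= k)%N -> `|phi (k.+1%:R * a)| <= e) ->
  (K <= N)%N ->
  a * series (fun j => r ^+ j * psi (j%:R * a)) N.+1 <=
  a * psi 0 + 2 * e - phi a + (1 - r) * \sum_(0 <= k < K) `|phi (k.+1%:R * a)| + a * K2.
Proof.
move=> a0 /andP[r0 r1] hs hW hWb hx KN.
set x := fun k : nat => phi (k.+1%:R * a).
set w := fun k : nat => W (k.+1%:R * a).
have e0 : 0 <= e by exact: le_trans (normr_ge0 _) (hx K (leqnn K)).
rewrite /series /= big_nat_recl // expr0 mul1r mul0r.
have step : forall j, a * (r ^+ j.+1 * psi (j.+1%:R * a)) <=
    r ^+ j.+1 * (x j.+1 - x j) + a * (w j.+1 - w j).
  move=> j.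
  have sj : 0 < j.+1%:R * a by apply: mulr_gt0 => //; rewrite ltr0n.
  have := hs _ sj.
  have -> : j.+1%:R * a + a = j.+2%:R * a by rewrite [in RHS]mulrSr mulrDl mul1r.
  rewrite -/(x j.+1) -/(x j) -/(w j.+1) -/(w j) => h.
  have h1 : a * psi (j.+1%:R * a) <= x j.+1 - x j + a * (w j.+1 - w j).
    have := ler_norm (- (x j.+1 - x j - a * psi (j.+1%:R * a))); rewrite normrN.
    lra.
  have hw : w j <= w j.+1.
    apply: hW => //; apply: ler_wpM2r; [exact: ltW | by rewrite ler_nat].
  have hr : 0 <= r ^+ j.+1 := exprn_ge0 _ r0.
  have hr1 : r ^+ j.+1 <= 1 by rewrite exprn_ile1.
  have haw : 0 <= a * (w j.+1 - w j) by apply: mulr_ge0; [exact: ltW | lra].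
  nra.
have hsum : a * \sum_(0 <= j < N) r ^+ j.+1 * psi (j.+1%:R * a) <=
    \sum_(0 <= j < N) r ^+ j.+1 * (x j.+1 - x j) + a * (w N - w 0%N).
  rewrite mulr_sumr -(telescope_sumr (fun k => w k)) // mulr_sumr -big_split /=.
  by apply: ler_sum => j _; exact: step.
rewrite sumT in hsum.
have hD := @sumD x r e K N (introT andP (conj r0 r1)) hx.
rewrite (_ : minn N K = K) in hD; last by apply/minn_idPr.
have hxN : r ^+ N * x N <= e.
  have hrN : 0 <= r ^+ N := exprn_ge0 _ r0.
  have hrN1 : r ^+ N <= 1 by rewrite exprn_ile1.
  have := hx N KN; have := ler_norm (x N).
  nra.
have heN : e * (1 - r ^+ N) <= e.
  have hrN : 0 <= r ^+ N := exprn_ge0 _ r0.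
  nra.
have hx0 : x 0%N = phi a by rewrite /x mul1r.
have hwN := hWb (N.+1%:R * a); have hw0 := hWb (1%:R * a).
rewrite -/(w N) in hwN; rewrite -/(w 0%N) in hw0.
have hK2 : a * (w N - w 0%N) <= a * K2.
  apply: ler_wpM2l; [exact: ltW | lra].
rewrite mulrDr.
lra.
Qed.
End S.
Unset Implicit Arguments. Set Strict Implicit. Set Printing Implicit Defensive.

Theorem mainTheorem9 (R : realType) (d : nat) (hd : (0 < d)%N)
  (phi dphi ddphi : R -> R)
  (hsmooth : smooth_Rd (fun x : 'rV[R]_d => phi (enorm x)))
  (hdphi : is_deriv_Ici phi dphi)
  (hddphi : is_deriv_Ici dphi ddphi)
  (hphi0 : 0 < phi 0)
  (hlim : phi @ +oo --> (0 : R))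
  (hint0 : (@lebesgue_measure R).-integrable `[0, +oo[ (EFin \o phi))
  (hint1 : (@lebesgue_measure R).-integrable `[0, +oo[ (EFin \o dphi))
  (hint2 : (@lebesgue_measure R).-integrable `[0, +oo[ (EFin \o ddphi))
  (eta_d eta_g : R) (hetad : 0 < eta_d) (hetag : 0 < eta_g) :
  exists lambda0 : R, 0 < lambda0 /\
    forall lambda : R, 0 < lambda -> lambda < lambda0 ->
      let rho := 1 - eta_d * lambda in
      exists v0 : R, 0 < v0 /\
        cvg (series (fun j : nat => rho ^+ j * dphi (j%:R * v0)) @ \oo) /\
        v0 = - (eta_g * eta_d) * limn (series (fun j : nat => rho ^+ j * dphi (j%:R * v0))).
Proof.
case: hdphi => hd1 hd1'; case: hddphi => hd2 _.
have cont := ddphi_cont hd hsmooth hd1 hd2.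
have [W [K2 [hW hWb]]] := W_exists cont hint2.
have hv := var_bound hd2 hW.
have hWm : forall s u : R, 0 < s -> s <= u -> W s <= W u.
  move=> s u s0 su; have := hv s u s0 su; have := normr_ge0 (dphi u - dphi s); lra.
have hr := riem_step hd1 hv.
have K20 : 0 <= K2 by case/andP: (hWb 0) => h1 h2; exact: le_trans h2.
set c := eta_g * eta_d.
have c0 : 0 < c by exact: mulr_gt0.
set psi0 := dphi 0.
set p := phi 0 / 2.
have p0 : 0 < p by exact: divr_gt0.
have q1 : \forall h \near (0:R)^'+, `|psi0 - (phi h - phi 0) / h| < 1.
  by move/cvgrPdist_lt : hd1' => /(_ 1 ltr01).
have [a [a0 a1 a3 a4]] : exists a : R, [/\ 0 < a, a <= 1,
    `|phi a - phi 0| <= p & a * (`|psi0| + K2 + c^-1) <= p / 4].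
  have C2 : 0 < `|psi0| + K2 + c^-1.
    by apply: ltr_pwDr; [rewrite invr_gt0 | exact: addr_ge0].
  have hC : 0 < (p / 4) / (`|psi0| + K2 + c^-1) by apply: divr_gt0 => //; apply: divr_gt0.
  have C1 : 0 < `|psi0| + 1 by rewrite ltr_pwDr.
  have hC1 : 0 < p / (`|psi0| + 1) by exact: divr_gt0.
  near (0:R)^'+ => a.
  have a0 : 0 < a by near: a; exact: nbhs_right_gt.
  have a1 : a <= 1 by near: a; exact: nbhs_right_le ltr01.
  have a5 : a <= p / (`|psi0| + 1).
    by near: a; exact: nbhs_right_le hC1.
  have a6 : a <= (p / 4) / (`|psi0| + K2 + c^-1).
    by near: a; exact: nbhs_right_le hC.
  have aq : `|psi0 - (phi a - phi 0) / a| < 1 by near: a; exact: q1.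
  exists a; split => //.
    have -> : phi a - phi 0 = a * ((phi a - phi 0) / a).
      by rewrite mulrC divfK // gt_eqF.
    rewrite normrM gtr0_norm //.
    have hq : `|(phi a - phi 0) / a| <= `|psi0| + 1.
      have := ler_normB psi0 (psi0 - (phi a - phi 0) / a).
      have -> : psi0 - (psi0 - (phi a - phi 0) / a) = (phi a - phi 0) / a by ring.
      lra.
    rewrite ler_pdivlMr // in a5.
    apply: le_trans a5; rewrite ler_wpM2l //; exact: ltW.
  by rewrite ler_pdivlMr // in a6.
set eps := p / 8.
have eps0 : 0 < eps by exact: divr_gt0.
have [M [_ HM]] : \forall u \near +oo, `|0 - phi u| < eps.
  by move/cvgrPdist_lt : hlim => /(_ eps eps0).
set K := Num.bound (`|M| / a).
have hK : M < K%:R * a.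
  apply: le_lt_trans (ler_norm M) _.
  rewrite -ltr_pdivrMr //; apply: archi_boundP; apply: divr_ge0 => //; exact: ltW.
have hx : forall k, (K <= k)%N -> `|phi (k.+1%:R * a)| <= eps.
  move=> k Kk; apply: ltW; rewrite -normrN -[- _]add0r; apply: HM.
  apply: lt_le_trans hK _; apply: ler_wpM2r; first exact: ltW.
  by rewrite ler_nat; exact: leqW.
set Y := \sum_(0 <= k < K) `|phi (k.+1%:R * a)|.
have Y0 : 0 <= Y by apply: sumr_ge0 => k _; exact: normr_ge0.
exists (p / (4 * eta_d * (Y + p))); split.
  apply: divr_gt0 => //; apply: mulr_gt0; [exact: mulr_gt0 | exact: ltr_pwDr].
move=> lambda l0 l1 rho.
have hl : lambda * (4 * eta_d * (Y + p)) < p.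
  rewrite -ltr_pdivlMr //; apply: mulr_gt0; [exact: mulr_gt0 | exact: ltr_pwDr].
have hel : 0 < eta_d * lambda by exact: mulr_gt0.
have r0 : 0 <= rho by rewrite /rho; nra.
have r1 : rho < 1 by rewrite /rho; lra.
have r1' : rho <= 1 by exact: ltW.
have hrY : (1 - rho) * Y <= p / 4 by rewrite /rho; nra.
set B := `|psi0| + `|dphi a| + K2.
pose m := fun v : R => a + `|v - a|.
have mge : forall v, a <= m v by move=> v; rewrite /m lerDl.
have mv : forall v, a <= v -> m v = v.
  by move=> v av; rewrite /m ger0_norm ?subr_ge0 // addrC subrK.
pose g := fun (j : nat) (v : R) => dphi (j%:R * m v).
have gB : forall j v, `|g j v| <= B.
  move=> [|j] v; rewrite /g.
    by rewrite mul0r /B -/psi0 -addrA lerDl; apply: addr_ge0.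
  set s := j.+1%:R * m v.
  have as_ : a <= s.
    apply: le_trans (mge v) _; rewrite /s -[leLHS]mul1r; apply: ler_wpM2r.
      exact: le_trans (ltW a0) (mge v).
    by rewrite ler1n.
  have := hv a s a0 as_.
  have := ler_normB (dphi a) (dphi a - dphi s).
  have -> : dphi a - (dphi a - dphi s) = dphi s by ring.
  rewrite distrC.
  case/andP: (hWb s) => _ hs; case/andP: (hWb a) => ha _.
  have := normr_ge0 psi0.
  rewrite /B; lra.
have gc : forall j, continuous (g j).
  move=> [|j].
    have -> : g 0%N = cst psi0 by apply: funext => v; rewrite /g mul0r.
    move=> x; exact: cvg_cst.
  move=> x; rewrite /g.
  apply: continuous_comp.
    apply: cvgM; first exact: cvg_cst.
    apply: cvgD; first exact: cvg_cst.
    apply: cvg_norm; apply: cvgB; [exact: cvg_id | exact: cvg_cst].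
  have sx : 0 < j.+1%:R * m x.
    apply: mulr_gt0; first by rewrite ltr0n.
    exact: lt_le_trans a0 (mge x).
  apply: differentiable_continuous; rewrite -derivable1_diffP.
  have [hh _] := hd2 _ sx; exact: hh.
have cF := cont_series r0 r1 gc gB.
pose Ft := fun v => limn (series (fun j => rho ^+ j * g j v)).
have tl : forall v, cvgn (series (fun j => rho ^+ j * g j v)) /\
    forall N, (1 - rho) * `|Ft v - series (fun j => rho ^+ j * g j v) N| <= B * rho ^+ N.
  move=> v; apply: (geom_tail r0 r1) => j.
  rewrite normrM ger0_norm ?exprn_ge0 // mulrC; apply: ler_wpM2r => //.
  exact: exprn_ge0.
pose H := fun v => v + c * Ft v.
have cH : continuous H.
  move=> x; apply: cvgD; first exact: cvg_id.
  apply: cvgM; first exact: cvg_cst.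
  exact: cF.
have ma : m a = a by apply: mv.
have Ha : H a < 0.
  have ga : (fun j => rho ^+ j * g j a) = (fun j => rho ^+ j * dphi (j%:R * a)).
    by apply: funext => j; rewrite /g ma.
  have [cva _] := tl a.
  rewrite ga in cva.
  set A' := a * psi0 + 2 * eps - phi a + (1 - rho) * Y + a * K2.
  have hcore : forall N, (K <= N)%N ->
      a * series (fun j => rho ^+ j * dphi (j%:R * a)) N.+1 <= A'.
    move=> N KN; apply: (@core R phi dphi W a rho eps K2 K N) => //.
    - by rewrite r0 r1'.
    - by move=> s s0; exact: hr.
  have hF : Ft a <= A' / a.
    rewrite /Ft ga; apply: limr_le => //.
    near=> n.
    have hn : (K.+1 <= n)%N by near: n; exact: nbhs_infty_ge.
    rewrite ler_pdivlMr // mulrC.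
    have -> : n = n.-1.+1 by rewrite prednK //; exact: leq_trans hn.
    apply: hcore; rewrite -ltnS prednK //; exact: leq_trans hn.
  rewrite ler_pdivlMr // in hF.
  have hpa : p <= phi a.
    have : phi 0 = 2 * p by rewrite /p; field.
    have := ler_norm (phi 0 - phi a); rewrite distrC; lra.
  have hps : a * psi0 <= a * `|psi0| by apply: ler_wpM2l; [exact: ltW | exact: ler_norm].
  have e4 : c * (a * (`|psi0| + K2 + c^-1)) = c * a * `|psi0| + c * a * K2 + a.
    by field; rewrite gt_eqF.
  have a4' : c * a * `|psi0| + c * a * K2 + a <= c * (p / 4).
    by rewrite -e4; apply: ler_wpM2l; [exact: ltW | exact: a4].
  have hA : c * A' + a * a < 0.
    rewrite /A' /eps.
    have : a * a <= a by rewrite -[leRHS]mul1r; apply: ler_wpM2r => //; exact: ltW.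
    nra.
  have : a * H a < 0.
    rewrite /H mulrDr.
    have : c * (Ft a * a) <= c * A' by apply: ler_wpM2l => //; exact: ltW.
    nra.
  by rewrite pmulr_rlt0.
set b := a + c * (B / (1 - rho)) + 1.
have r1p : 0 < 1 - rho by rewrite subr_gt0.
have B0 : 0 <= B by exact: le_trans (normr_ge0 _) (gB 0%N 0).
have cb : 0 <= c * (B / (1 - rho)) by apply: mulr_ge0; [exact: ltW | exact: divr_ge0 (ltW r1p)].
have ab : a <= b by rewrite /b -addrA lerDl; apply: addr_ge0.
have Hb : 0 < H b.
  have [_ t0] := tl b.
  have := t0 0%N; rewrite expr0 mulr1 /series /= big_geq // subr0 => h.
  have h2 : `|Ft b| <= B / (1 - rho) by rewrite ler_pdivlMr // mulrC.
  have h3 : - (B / (1 - rho)) <= Ft b by have := ler_norm (- Ft b); rewrite normrN; lra.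
  have h4 : - (c * (B / (1 - rho))) <= c * Ft b.
    by rewrite -mulrN; apply: ler_wpM2l => //; exact: ltW.
  rewrite /H /b; lra.
have hmin : Num.min (H a) (H b) <= 0 by rewrite ge_min (ltW Ha).
have hmax : 0 <= Num.max (H a) (H b) by rewrite le_max (ltW Hb) orbT.
have [v0 v0in Hv0] : exists2 v0, v0 \in `[a, b] & H v0 = 0.
  by apply: IVT => //; [exact: continuous_subspaceT | rewrite hmin hmax].
move: v0in; rewrite in_itv /= => /andP[av0 _].
have gv : (fun j => rho ^+ j * g j v0) = (fun j => rho ^+ j * dphi (j%:R * v0)).
  by apply: funext => j; rewrite /g mv.
exists v0; split; first exact: lt_le_trans a0 av0.
have [cv _] := tl v0; rewrite gv in cv; split => //.
move: Hv0; rewrite /H /Ft gv => hv0.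
lra.
Unshelve. all: by end_near. Qed.
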